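(* Let $n_d\ge 1$ and for $i=1,\dots,n_d$ let $S_i>0$, $\overline{P_i}\in(0,1]$ and $\theta_i\in[0,\pi/2]$. For $S>0$, $\overline{P}\in(0,1]$, $\theta\in[0,\pi/2]$ define $\mathcal{X}(S,\overline{P},\theta)=\{(P,Q)\in\mathbb{R}^2: 0\le P\le S\overline{P},\ Q^2\le S^2-P^2,\ |Q|\le\tan(\theta)P\}$, where for $\theta=\pi/2$ the constraint $|Q|\le\tan(\theta)P$ is omitted. Let $S_0=\min_i S_i$, $\overline{P_0}=\min_i\overline{P_i}$, $\theta_0=\min_i\theta_i$. Then $$\mathcal{X}(n_dS_0,\overline{P_0},\theta_0)\subseteq\bigoplus_{i=1}^{n_d}\mathcal{X}(S_i,\overline{P_i},\theta_i),$$ and equality holds if and only if all parameters are homogeneous, i.e. $S_i=S_0$, $\overline{P_i}=\overline{P_0}$ and $\theta_i=\theta_0$ for all $i$.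
   Context: $\oplus$ denotes the Minkowski sum $A\oplus B=\{a+b: a\in A, b\in B\}$. The set $\mathcal{X}(S,\overline{P},\theta)$ is the feasible real/reactive power set of a photovoltaic inverter with apparent power rating $S$, normalized available real power $\overline{P}$ (normalized with respect to $S$), and minimum power factor $\cos\theta$. *)

(* Defs.v *)
From Stdlib Require Import Reals Lra.
Open Scope R_scope.

Definition Xset (S Pbar theta : R) (P Q : R) : Prop :=
  0 <= P /\ P <= S * Pbar /\ Q ^ 2 <= S ^ 2 - P ^ 2 /\
  (theta = PI / 2 \/ Rabs Q <= tan theta * P).

Fixpoint rsum (f : nat -> R) (n : nat) : R :=
  match n with
  | O => 0
  | S k => rsum f k + f k
  end.

Fixpoint rmin_upto (f : nat -> R) (k : nat) : R :=
  match k with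
  | O => f O
  | S k' => Rmin (rmin_upto f k') (f k)
  end.

(* minimum over indices i < n (for n >= 1) *)
Definition rmin_lt (f : nat -> R) (n : nat) : R := rmin_upto f (Nat.pred n).

Definition msum (X : nat -> R -> R -> Prop) (n : nat) (P Q : R) : Prop :=
  exists p q : nat -> R,
    (forall i, (i < n)%nat -> X i (p i) (q i)) /\
    P = rsum p n /\ Q = rsum q n.

(* Main.v *)
Require Import Defs.
From Stdlib Require Import Reals Lra Psatz.
Open Scope R_scope.

Lemma rmin_upto_le f k i : (i <= k)%nat -> rmin_upto f k <= f i.
Proof.
  induction k; intros H; simpl.
  - assert (i = O) by lia; subst; lra.
  - destruct (Nat.eq_dec i (S k)) as [->|Hne].
    + apply Rmin_r.
    + eapply Rle_trans; [apply Rmin_l| apply IHk; lia].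
Qed.

Lemma rmin_upto_ex f k : exists j, (j <= k)%nat /\ rmin_upto f k = f j.
Proof.
  induction k; simpl.
  - exists O; split; auto.
  - destruct IHk as [j [Hj E]]. unfold Rmin.
    destruct (Rle_dec (rmin_upto f k) (f (S k))).
    + exists j; split; [lia|auto].
    + exists (S k); split; auto.
Qed.

Lemma rmin_lt_le f n i : (i < n)%nat -> rmin_lt f n <= f i.
Proof. intros; unfold rmin_lt; apply rmin_upto_le; lia. Qed.

Lemma rmin_lt_ex f n : (1 <= n)%nat -> exists j, (j < n)%nat /\ rmin_lt f n = f j.
Proof.
  intros; unfold rmin_lt. destruct (rmin_upto_ex f (Nat.pred n)) as [j [Hj E]].
  exists j; split; [lia|auto].
Qed.

Lemma rsum_const c n : rsum (fun _ => c) n = INR n * c.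
Proof. induction n; simpl rsum; [simpl; ring| rewrite IHn, S_INR; ring]. Qed.

Lemma rsum_ge f a n : (forall i, (i < n)%nat -> a <= f i) ->
  INR n * a <= rsum f n /\ (forall j, (j < n)%nat -> f j - a <= rsum f n - INR n * a).
Proof.
  induction n; intros H; simpl rsum.
  - split; [simpl; lra| intros; lia].
  - destruct IHn as [H1 H2]; [intros; apply H; lia|].
    rewrite S_INR. assert (a <= f n) by (apply H; lia).
    split; [lra|]. intros j Hj.
    destruct (Nat.eq_dec j n) as [->|]; [lra|].
    assert (f j - a <= rsum f n - INR n * a) by (apply H2; lia). lra.
Qed.

Lemma tan_nonneg x : 0 <= x < PI/2 -> 0 <= tan x.
Proof.
  intros [H1 H2]. destruct (Req_dec x 0) as [->|]; [rewrite tan_0; lra|].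
  left; apply tan_gt_0; lra.
Qed.

Lemma tan_le x y : 0 <= x -> x <= y -> y < PI/2 -> tan x <= tan y.
Proof.
  intros. destruct (Req_dec x y) as [->|]; [lra|].
  left; apply tan_increasing; pose proof PI_RGT_0; lra.
Qed.

Lemma Xset_add a b Pb th P1 Q1 P2 Q2 : 0 <= a -> 0 <= b ->
  Xset a Pb th P1 Q1 -> Xset b Pb th P2 Q2 -> Xset (a+b) Pb th (P1+P2) (Q1+Q2).
Proof.
  unfold Xset; intros Ha Hb [A1 [B1 [C1 D1]]] [A2 [B2 [C2 D2]]].
  split; [lra|]. split; [rewrite Rmult_plus_distr_r; lra|]. split.
  - assert (HC: P1*P2+Q1*Q2 <= a*b).
    { assert (E: (P1^2+Q1^2)*(P2^2+Q2^2) = (P1*P2+Q1*Q2)^2 + (P1*Q2-Q1*P2)^2) by ring.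
      assert (0 <= P1^2+Q1^2 <= a^2) by nra. assert (0 <= P2^2+Q2^2 <= b^2) by nra.
      assert ((P1^2+Q1^2)*(P2^2+Q2^2) <= a^2*b^2) by (apply Rmult_le_compat; lra).
      assert ((P1*P2+Q1*Q2)^2 <= (a*b)^2) by (rewrite Rpow_mult_distr; pose proof (pow2_ge_0 (P1*Q2-Q1*P2)); lra).
      destruct (Rle_dec (P1*P2+Q1*Q2) (a*b)); [auto|exfalso; assert (0 <= a*b) by nra; assert ((a*b)*(a*b) < (P1*P2+Q1*Q2)*(P1*P2+Q1*Q2)) by (apply Rmult_le_0_lt_compat; lra); nra]. }
    nra.
  - destruct D1 as [D1|D1]; [left; auto|]. destruct D2 as [D2|D2]; [left; auto|].
    right. pose proof (Rabs_triang Q1 Q2). lra.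
Qed.

Lemma Xset_zero S Pb th : 0 <= S -> 0 <= Pb -> Xset S Pb th 0 0.
Proof.
  unfold Xset; intros. rewrite Rabs_R0. split; [lra|]. split; [nra|]. split; [nra|]. right; lra.
Qed.

Theorem theorem2 (nd : nat) (Srat Pb th : nat -> R)
  (Hnd : (1 <= nd)%nat)
  (HS : forall i, (i < nd)%nat -> 0 < Srat i)
  (HPb : forall i, (i < nd)%nat -> 0 < Pb i <= 1)
  (Hth : forall i, (i < nd)%nat -> 0 <= th i <= PI / 2) :
  let S0 := rmin_lt Srat nd in
  let P0 := rmin_lt Pb nd in
  let th0 := rmin_lt th nd in
  let Xi := fun i => Xset (Srat i) (Pb i) (th i) in
  (forall P Q, Xset (INR nd * S0) P0 th0 P Q -> msum Xi nd P Q) /\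
  ((forall P Q, Xset (INR nd * S0) P0 th0 P Q <-> msum Xi nd P Q) <->
   (forall i, (i < nd)%nat -> Srat i = S0 /\ Pb i = P0 /\ th i = th0)).
Proof.
  intros S0 P0 th0 Xi.
  assert (HS0 : 0 < S0 /\ forall i, (i < nd)%nat -> S0 <= Srat i).
  { destruct (rmin_lt_ex Srat nd Hnd) as [j [Hj E]]. split.
    - unfold S0; rewrite E; auto.
    - intros; apply rmin_lt_le; auto. }
  assert (HP0 : 0 < P0 /\ forall i, (i < nd)%nat -> P0 <= Pb i).
  { destruct (rmin_lt_ex Pb nd Hnd) as [j [Hj E]]. split.
    - unfold P0; rewrite E; apply HPb; auto.
    - intros; apply rmin_lt_le; auto. }
  assert (Hth0 : 0 <= th0 <= PI/2 /\ forall i, (i < nd)%nat -> th0 <= th i).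
  { destruct (rmin_lt_ex th nd Hnd) as [j [Hj E]]. split.
    - unfold th0; rewrite E; apply Hth; auto.
    - intros; apply rmin_lt_le; auto. }
  destruct HS0 as [HS0 HS0i]. destruct HP0 as [HP0 HP0i]. destruct Hth0 as [Hth0 Hth0i]. clearbody S0 P0 th0.
  assert (HN : 0 < INR nd) by (apply lt_0_INR; lia).
  assert (Part1 : forall P Q, Xset (INR nd * S0) P0 th0 P Q -> msum Xi nd P Q).
  { intros P Q [A [B [C D]]].
    set (N := INR nd) in *.
    exists (fun _ => P / N), (fun _ => Q / N).
    split; [|split; rewrite rsum_const; unfold N; field; apply Rgt_not_eq; exact HN].
    intros i Hi. unfold Xi, Xset.
    set (x := P / N). set (y := Q / N).
    assert (Px : P = N * x) by (unfold x; field; lra).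
    assert (Qy : Q = N * y) by (unfold y; field; lra).
    rewrite Px in A, B, C. rewrite Qy in C, D.
    pose proof (HS0i i Hi). pose proof (HP0i i Hi). pose proof (Hth0i i Hi).
    pose proof (Hth i Hi). pose proof (HPb i Hi).
    clearbody x y N.
    assert (Hx0 : 0 <= x) by (clear - HN A; nra).
    assert (Hx1 : x <= S0 * P0) by (clear - HN B; nra).
    assert (Hy : y^2 <= S0^2 - x^2).
    { clear - HN C. rewrite !Rpow_mult_distr in C.
      apply (Rmult_le_reg_l (N^2)); [apply pow_lt; lra|]. lra. }
    split; [exact Hx0|]. split; [clear - Hx1 H H0 HS0 HP0; nra|]. split.
    { clear - Hy H HS0; nra. }
    destruct D as [D|D].
    { left; lra. }
    destruct (Req_dec (th i) (PI/2)) as [E|E]; [left; auto|right].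
    rewrite Rabs_mult, (Rabs_right N) in D by lra.
    assert (tan th0 <= tan (th i)) by (apply tan_le; lra).
    assert (0 <= x) by nra.
    assert (Rabs y <= tan th0 * x) by nra. nra. }
  split; [exact Part1|]. split.
  - intros Heq.
    assert (HSP : forall i, (i < nd)%nat -> Srat i = S0 /\ Pb i = P0).
    { assert (Hm : msum Xi nd (rsum (fun i => Srat i * Pb i) nd) 0).
      { exists (fun i => Srat i * Pb i), (fun _ => 0). split; [|split; auto].
        2: { rewrite rsum_const; ring. }
        intros i Hi. unfold Xi, Xset. pose proof (HS i Hi). pose proof (HPb i Hi).
        pose proof (Hth i Hi).
        assert (0 < Srat i * Pb i) by (apply Rmult_lt_0_compat; lra).
        assert ((Srat i * Pb i)^2 <= Srat i ^2).
        { clear - H H0. rewrite Rpow_mult_distr. rewrite <- (Rmult_1_r (Srat i ^2)) at 2.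
          apply Rmult_le_compat_l; [apply pow2_ge_0| nra]. }
        split; [lra|]. split; [lra|]. split; [lra|].
        destruct (Req_dec (th i) (PI/2)); [left; auto|right].
        rewrite Rabs_R0. assert (0 <= tan (th i)) by (apply tan_nonneg; lra).
        apply Rmult_le_pos; lra. }
      apply Heq in Hm. destruct Hm as [_ [B _]].
      destruct (rsum_ge (fun i => Srat i * Pb i) (S0 * P0) nd) as [_ H2].
      { intros i Hi. pose proof (HS0i i Hi). pose proof (HP0i i Hi). nra. }
      intros i Hi. specialize (H2 i Hi). simpl in H2.
      pose proof (HS0i i Hi). pose proof (HP0i i Hi). pose proof (HS i Hi).
      assert (Srat i * Pb i = S0 * P0) by nra.
      split; nra. }
    intros i Hi. destruct (HSP i Hi) as [E1 E2]. split; [auto|split; [auto|]].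
    pose proof (Hth0i i Hi). pose proof (Hth i Hi).
    destruct (Req_dec (th i) th0) as [|Hne]; [auto|exfalso].
    assert (Hlt : th0 < th i) by lra.
    assert (Hc : exists c, tan th0 < c /\ (th i = PI/2 \/ c <= tan (th i))).
    { destruct (Req_dec (th i) (PI/2)).
      - exists (tan th0 + 1); split; [lra| left; auto].
      - exists (tan (th i)); split; [apply tan_increasing; pose proof PI_RGT_0; lra| right; lra]. }
    destruct Hc as [c [Hc1 Hc2]].
    assert (Hc0 : 0 <= tan th0) by (apply tan_nonneg; lra).
    set (t := Srat i * Pb i / (1 + c)).
    pose proof (HS i Hi) as HSi. pose proof (HPb i Hi) as HPbi.
    assert (Ht : 0 < t) by (unfold t; apply Rdiv_lt_0_compat; nra).
    assert (Ht2 : t * (1 + c) = Srat i * Pb i) by (unfold t; field; lra).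
    assert (Hm : msum Xi nd t (c * t)).
    { exists (fun k => if Nat.eq_dec k i then t else 0),
             (fun k => if Nat.eq_dec k i then c * t else 0).
      assert (Hsum : forall g : R, (forall n, rsum (fun k => if Nat.eq_dec k i then g else 0) n
                       = if Nat.ltb i n then g else 0)).
      { intros g n; induction n; simpl rsum; [simpl; ring|].
        rewrite IHn. destruct (Nat.eq_dec n i) as [->|].
        - rewrite (proj2 (Nat.ltb_nlt i i)) by lia. rewrite (proj2 (Nat.ltb_lt i (S i))) by lia. ring.
        - destruct (Nat.ltb i n) eqn:F1; destruct (Nat.ltb i (S n)) eqn:F2; try ring.
          + apply Nat.ltb_lt in F1; apply Nat.ltb_nlt in F2; lia.
          + apply Nat.ltb_nlt in F1; apply Nat.ltb_lt in F2; lia. }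
      rewrite !Hsum. rewrite (proj2 (Nat.ltb_lt i nd)) by lia.
      split; [|split; auto].
      intros k Hk. unfold Xi. destruct (Nat.eq_dec k i) as [->|].
      - assert (Hcc : 0 <= c) by lra.
        assert (Htc : 0 <= t * c) by (apply Rmult_le_pos; lra).
        assert (HSP1 : Srat i * Pb i <= Srat i) by (clear - HSi HPbi; nra).
        assert (HSP0 : 0 < Srat i * Pb i) by (apply Rmult_lt_0_compat; lra).
        assert (Hq : t^2*(1+c^2) <= (t*(1+c))^2) by (clear - Ht Hcc; nra).
        rewrite Ht2 in Hq.
        assert (Hq2 : (Srat i * Pb i)^2 <= Srat i ^2) by (clear - HSP1 HSP0; nra).
        unfold Xset. split; [lra|]. split; [clear - Ht2 Htc; nra|]. split.
        + clear - Hq Hq2. nra.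
        + destruct Hc2 as [?|Hc3]; [left; auto|right].
          rewrite Rabs_right by (clear - Htc; nra). apply Rmult_le_compat_r; lra.
      - apply Xset_zero; [pose proof (HS k Hk); lra| pose proof (HPb k Hk); lra]. }
    apply Heq in Hm. destruct Hm as [_ [_ [_ [D|D]]]]; [lra|].
    assert (Htc : 0 <= c * t) by (apply Rmult_le_pos; lra).
    rewrite Rabs_right in D by lra. clear - D Hc1 Ht. nra.
  - intros Hhom P Q. split; [apply Part1|].
    intros [p [q [Hx [-> ->]]]].
    assert (Gen : forall k, (k <= nd)%nat -> Xset (INR k * S0) P0 th0 (rsum p k) (rsum q k)).
    { induction k; intros Hk; simpl rsum.
      - simpl. rewrite Rmult_0_l. apply Xset_zero; lra.
      - rewrite S_INR, Rmult_plus_distr_r, Rmult_1_l. apply Xset_add.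
        + pose proof (pos_INR k); nra.
        + lra.
        + apply IHk; lia.
        + destruct (Hhom k ltac:(lia)) as [E1 [E2 E3]].
          specialize (Hx k ltac:(lia)). unfold Xi in Hx. rewrite E1, E2, E3 in Hx. exact Hx. }
    apply Gen; lia.
Qed.
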